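(* Let $\Lambda$ be the preprojective algebra of a finite graph $\Gamma$ without loops, and let $q=\bigoplus_{i\in I} q_i^{\oplus a_i}$ with nonnegative integers $a_i$. Let $x$ be a finite-dimensional $\Lambda$-module isomorphic to a submodule of $q$. If $f_1:x\to q$ and $f_2:x\to q$ are two monomorphisms of $\Lambda$-modules, then there exists an automorphism $g:q\to q$ of $\Lambda$-modules such that $f_2=g f_1$.
   Context: $\Gamma$ is a finite unoriented graph without loops (multiple edges allowed) with vertex set $I$; $\Lambda$ is its preprojective algebra over $\mathbb{C}$ (in the sense of Gelfand–Ponomarev). For $i\in I$, $s_i$ is the one-dimensional simple $\Lambda$-module at vertex $i$ and $q_i$ is its injective hull. *)

(* Defs.v *)
From mathcomp Require Import all_boot all_algebra.
From mathcomp Require Import reals complex.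
Set Implicit Arguments. Unset Strict Implicit. Unset Printing Implicit Defensive.
Import GRing.Theory.
Local Open Scope ring_scope.

Section Preprojective.
Variables (K : fieldType) (I E : finType) (src tgt : E -> I).
(* The graph Gamma: vertex set I, edge set E; each edge e is given an
   (arbitrary) orientation src e --- tgt e.  Loops are excluded in the theorem
   statement by the hypothesis src e != tgt e. *)

(* Arrows of the double quiver: inl e : src e -> tgt e, inr e : tgt e -> src e. *)
Definition arrow := (E + E)%type.
Definition hsrc (h : arrow) : I := match h with inl e => src e | inr e => tgt e end.
Definition htgt (h : arrow) : I := match h with inl e => tgt e | inr e => src e end.
Definition hbar (h : arrow) : arrow := match h with inl e => inr e | inr e => inl e end.
Definition heps (h : arrow) : K := match h with inl _ => 1 | inr _ => -1 end.

(* A (left) module over Lambda = K Qbar / (sum_h eps(h) h hbar): a K-vector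
   space with orthogonal idempotents e_i summing to 1, and arrow operators
   a_h = e_(htgt h) a_h e_(hsrc h) satisfying the preprojective relation.
   (a_h (a_hbar v) = action of the path "hbar then h".) *)
Record pmod := PMod {
  pcar :> lmodType K;
  pe : I -> pcar -> pcar;
  pa : arrow -> pcar -> pcar;
  pe_lin : forall i, linear (pe i);
  pa_lin : forall h, linear (pa h);
  pe_orth : forall i j v, pe i (pe j v) = if i == j then pe i v else 0;
  pe_sum : forall v, \sum_(i : I) pe i v = v;
  pa_e : forall h v, pa h v = pe (htgt h) (pa h (pe (hsrc h) v));
  pa_rel : forall v, \sum_(h : arrow) heps h *: pa h (pa (hbar h) v) = 0
}.

Definition is_hom (M N : pmod) (f : M -> N) : Prop :=
  [/\ linear f,
      forall i v, f (pe i v) = pe i (f v) &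
      forall h v, f (pa h v) = pa h (f v)].
Definition is_mono (M N : pmod) (f : M -> N) : Prop := is_hom f /\ injective f.
Definition is_auto (M : pmod) (g : M -> M) : Prop := is_hom g /\ bijective g.

Definition injective_module (Q : pmod) : Prop :=
  forall (X Y : pmod) (u : X -> Y) (f : X -> Q),
    is_mono u -> is_hom f ->
    exists g : Y -> Q, is_hom g /\ forall x, g (u x) = f x.

Definition essential_mono (A Q : pmod) (u : A -> Q) : Prop :=
  is_mono u /\
  forall (Y : pmod) (g : Q -> Y), is_hom g -> is_mono (g \o u) -> is_mono g.

Section Simple.
Variable i : I.
Definition s_e (j : I) (v : K^o) : K^o := ((j == i)%:R : K) *: v.
Definition s_a (h : arrow) (v : K^o) : K^o := 0.
Lemma s_e_lin j : linear (s_e j).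
Proof. by move=> a u v; rewrite /s_e scalerDr !scalerA mulrC. Qed.
Lemma s_a_lin h : linear (s_a h).
Proof. by move=> a u v; rewrite /s_a scaler0 addr0. Qed.
Lemma s_e_orth j k v : s_e j (s_e k v) = if j == k then s_e j v else 0.
Proof.
rewrite /s_e scalerA; case: (eqVneq j k) => [->|njk].
  by case: (k == i); rewrite ?mulr1 ?mulr0.
case: (eqVneq j i) => [eji|nji]; case: (eqVneq k i) => [eki|nki] //=;
  rewrite ?mul0r ?mulr0 ?scale0r //.
by move: njk; rewrite eji eki eqxx.
Qed.
Lemma s_e_sum v : \sum_(j : I) s_e j v = v.
Proof.
rewrite (bigD1 i) //= big1 ?addr0 /s_e ?eqxx ?scale1r // => j nji.
by rewrite (negbTE nji) scale0r.
Qed.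
Lemma s_a_e h v : s_a h v = s_e (htgt h) (s_a h (s_e (hsrc h) v)).
Proof. by rewrite /s_a /s_e scaler0. Qed.
Lemma s_a_rel v : \sum_(h : arrow) heps h *: s_a h (s_a (hbar h) v) = 0.
Proof. by rewrite big1 // => h _; rewrite /s_a scaler0. Qed.
Definition simple_mod : pmod :=
  PMod s_e_lin s_a_lin s_e_orth s_e_sum s_a_e s_a_rel.
End Simple.

Definition injective_hull_of_simple (i : I) (Q : pmod) : Prop :=
  injective_module Q /\ exists u : simple_mod i -> Q, essential_mono u.

(* q is a direct sum (biproduct) of the family (Q (tag k))_k, indexed by the
   finite type of pairs k = (i, m) with m < a i, i.e. q = (+)_i Q_i^(+a_i). *)
Definition is_direct_sum (a : I -> nat) (Q : I -> pmod) (q : pmod)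
  (inj : forall k : {i : I & 'I_(a i)}, Q (tag k) -> q)
  (proj : forall k : {i : I & 'I_(a i)}, q -> Q (tag k)) : Prop :=
  [/\ forall k, is_hom (inj k),
      forall k, is_hom (proj k),
      forall k v, proj k (inj k v) = v,
      forall k l v, k != l -> proj l (inj k v) = 0 &
      forall w, \sum_(k : {i : I & 'I_(a i)}) inj k (proj k w) = w].

Definition fin_dim (M : pmod) : Prop :=
  exists (n : nat) (b : 'I_n -> M),
    forall v : M, exists c : 'I_n -> K, v = \sum_(j < n) c j *: b j.

End Preprojective.

(* Main.v *)
Require Import Defs.
From mathcomp Require Import all_boot all_algebra.
From mathcomp Require Import reals complex boolp.
Set Implicit Arguments. Unset Strict Implicit. Unset Printing Implicit Defensive.
Import GRing.Theory.
Local Open Scope ring_scope.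

Section Lin.
Variables (K : fieldType) (U V : lmodType K) (f : U -> V) (lf : linear f).
Lemma linD u v : f (u + v) = f u + f v.
Proof. by have := lf 1 u v; rewrite !scale1r. Qed.
Lemma lin0 : f 0 = 0.
Proof.
have := lf 1 0 0; rewrite !scale1r addr0 => H.
by apply: (@addrI _ (f 0)); rewrite addr0 -H.
Qed.
Lemma linZ a u : f (a *: u) = a *: f u.
Proof. by have := lf a u 0; rewrite !addr0 lin0 addr0. Qed.
Lemma linN u : f (- u) = - f u.
Proof. by rewrite -scaleN1r linZ scaleN1r. Qed.
Lemma linB u v : f (u - v) = f u - f v.
Proof. by rewrite linD linN. Qed.
Lemma lin_sum (J : Type) (r : seq J) (P : pred J) (F : J -> U) :
  f (\sum_(j <- r | P j) F j) = \sum_(j <- r | P j) f (F j).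
Proof. exact: (big_morph f linD lin0). Qed.
End Lin.

Section Gen.
Variables (K : fieldType) (I E : finType) (src tgt : E -> I).
Notation pm := (pmod K src tgt).

Lemma hom_lin (M N : pm) (f : M -> N) : is_hom f -> linear f.
Proof. by case. Qed.

Lemma hom_comp (M N P : pm) (f : M -> N) (g : N -> P) :
  is_hom f -> is_hom g -> is_hom (g \o f).
Proof.
move=> [lf ef af] [lg eg ag]; split => [a u v|i v|h v] /=.
- by rewrite lf lg.
- by rewrite ef eg.
- by rewrite af ag.
Qed.

Lemma hom_id (M : pm) : is_hom (@id M).
Proof. by split. Qed.

Lemma hom_sub (M N : pm) (f g : M -> N) :
  is_hom f -> is_hom g -> is_hom (fun v => f v - g v).
Proof.
move=> [lf ef af] [lg eg ag]; split => [a u v|i v|h v] /=.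
- rewrite lf lg scalerBr; rewrite -!addrA; congr (_ + _).
  by rewrite opprD addrCA.
- by rewrite ef eg (linB (pe_lin i)).
- by rewrite af ag (linB (pa_lin h)).
Qed.

Lemma hom_sum (J : finType) (M N : pm) (F : J -> M -> N) :
  (forall j, is_hom (F j)) -> is_hom (fun v => \sum_j F j v).
Proof.
move=> hF; split => [a u v|i v|h v] /=.
- rewrite scaler_sumr -big_split /=; apply: eq_bigr => j _.
  by case: (hF j) => lf _ _; rewrite lf.
- rewrite (lin_sum (pe_lin i)); apply: eq_bigr => j _.
  by case: (hF j) => _ ef _; rewrite ef.
- rewrite (lin_sum (pa_lin h)); apply: eq_bigr => j _.
  by case: (hF j) => _ _ af; rewrite af.
Qed.

Definition killed (M : pm) (v : M) := forall h, pa h v = 0.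

Lemma pa_pe (M : pm) h j (v : M) :
  pa h (pe j v) = if j == hsrc src tgt h then pa h v else 0.
Proof.
rewrite (pa_e h (pe j v)) pe_orth.
case: (eqVneq j (hsrc src tgt h)) => [_|ne]; first by rewrite [RHS](pa_e h v).
by rewrite (lin0 (pa_lin h)) (lin0 (pe_lin _)).
Qed.

Lemma killed_pe (M : pm) j (v : M) : killed v -> killed (pe j v).
Proof. by move=> kv h; rewrite pa_pe kv; case: ifP. Qed.

Lemma killed_hom (M N : pm) (f : M -> N) v : is_hom f -> killed v -> killed (f v).
Proof. by move=> [lf _ af] kv h; rewrite -af kv (lin0 lf). Qed.

Lemma killedB (M : pm) (u v : M) : killed u -> killed v -> killed (u - v).
Proof. by move=> ku kv h; rewrite (linB (pa_lin h)) ku kv subrr. Qed.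

Lemma killed0 (M : pm) : killed (0 : M).
Proof. by move=> h; rewrite (lin0 (pa_lin h)). Qed.

Lemma killedZ (M : pm) a (v : M) : killed v -> killed (a *: v).
Proof. by move=> kv h; rewrite (linZ (pa_lin h)) kv scaler0. Qed.

Lemma killed_sum (M : pm) (J : finType) (F : J -> M) :
  (forall j, killed (F j)) -> killed (\sum_j F j).
Proof.
move=> kF h; rewrite (lin_sum (pa_lin h)) big1 // => j _; exact: kF.
Qed.

Lemma mono_ker (M N : pm) (f : M -> N) : is_mono f -> forall v, f v = 0 -> v = 0.
Proof. by move=> [[lf _ _] fi] v fv; apply: fi; rewrite fv (lin0 lf). Qed.

Lemma ker_inj (M N : pm) (f : M -> N) : linear f ->
  (forall v, f v = 0 -> v = 0) -> injective f.
Proof.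
move=> lf H u v e; apply/eqP; rewrite -subr_eq0; apply/eqP; apply: H.
by rewrite (linB lf) e subrr.
Qed.

Section Prod.
Variables (M N : pm).
Definition pr_e (i : I) (p : (M * N)%type) : (M * N)%type := (pe i p.1, pe i p.2).
Definition pr_a (h : arrow E) (p : (M * N)%type) : (M * N)%type := (pa h p.1, pa h p.2).
Lemma pr_e_lin i : linear (pr_e i).
Proof. by move=> a u v; rewrite /pr_e /= !pe_lin. Qed.
Lemma pr_a_lin h : linear (pr_a h).
Proof. by move=> a u v; rewrite /pr_a /= !pa_lin. Qed.
Lemma pr_e_orth i j v : pr_e i (pr_e j v) = if i == j then pr_e i v else 0.
Proof. by rewrite /pr_e /= !pe_orth; case: ifP. Qed.
Lemma fst_sum (J : finType) (F : J -> (M * N)%type) : (\sum_j F j).1 = \sum_j (F j).1.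
Proof. exact: (big_morph fst (fun _ _ => erefl) erefl). Qed.
Lemma snd_sum (J : finType) (F : J -> (M * N)%type) : (\sum_j F j).2 = \sum_j (F j).2.
Proof. exact: (big_morph snd (fun _ _ => erefl) erefl). Qed.
Lemma pr_e_sum v : \sum_i pr_e i v = v.
Proof.
case: v => m n; rewrite [LHS]surjective_pairing fst_sum snd_sum /pr_e /=.
by rewrite !pe_sum.
Qed.
Lemma pr_a_e h v : pr_a h v = pr_e (htgt src tgt h) (pr_a h (pr_e (hsrc src tgt h) v)).
Proof. by rewrite /pr_a /pr_e /= -!pa_e. Qed.
Lemma pr_a_rel v : \sum_h heps K h *: pr_a h (pr_a (hbar h) v) = 0.
Proof.
rewrite [LHS]surjective_pairing fst_sum snd_sum /=.
by rewrite (pa_rel v.1) (pa_rel v.2).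
Qed.
Definition prod_mod : pm := PMod pr_e_lin pr_a_lin pr_e_orth pr_e_sum pr_a_e pr_a_rel.
End Prod.

End Gen.

Section S.
Variables (K : fieldType) (I E : finType) (src tgt : E -> I).
Notation pm := (pmod K src tgt).
Notation smod := (simple_mod K src tgt).

Lemma simple_scale i (c : K) : (c *: (1 : smod i)) = c :> K.
Proof. by rewrite /GRing.scale /= mulr1. Qed.

Lemma hom_simple_scale i (Qm : pm) (u : smod i -> Qm) : is_hom u -> forall c : K, u c = c *: u 1.
Proof. by move=> [lu _ _] c; rewrite -(linZ lu) simple_scale. Qed.

Lemma socle_hom (i0 : I) (Qm : pm) (injQ : injective_module Qm)
  (u : smod i0 -> Qm) (eu : essential_mono u) (j : I) (w : Qm) :
  killed w -> pe j w = w -> exists c : K, w = c *: u 1.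
Proof.
move=> kw ew; case: (pselect (exists c : K, w = c *: u 1)) => // nc.
have hu : is_hom u by case: eu => [[]].
have uinj : injective u by case: eu => [[]].
have [lu eu' au] := hu.
have uS := hom_simple_scale hu.
pose X := prod_mod (smod i0) (smod j).
pose m (p : X) : Qm := u p.1 + (p.2 : K) *: w.
have mhom : is_hom m.
  split => [a p p'|i p|h p]; rewrite /m /=.
  - rewrite lu.
    have -> : (a *: p.2 + p'.2) *: w = a *: ((p.2 : K) *: w) + (p'.2 : K) *: w.
      by rewrite scalerDl scalerA.
    by rewrite scalerDr addrACA.
  - rewrite eu' (linD (pe_lin i)) (linZ (pe_lin i)); congr (_ + _).
    rewrite -{2}ew pe_orth /s_e.
    case: eqP => [->|_]; first by rewrite scale1r ew.
    by rewrite !scale0r scaler0.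
  - rewrite (linD (pa_lin h)) (linZ (pa_lin h)) kw scaler0 addr0 -au.
    by rewrite /s_a /= (lin0 lu) scale0r addr0.
have minj : injective m.
  apply: ker_inj; first by case: mhom.
  case=> [a b]; rewrite /m /= => e0.
  have b0 : b = 0.
    apply/eqP; apply: contraT => nb; exfalso; apply: nc.
    exists (- (b : K)^-1 * a); rewrite uS in e0.
    have e1 : (b : K) *: w = - ((a : K) *: u 1).
      by apply/eqP; rewrite -addr_eq0 addrC e0.
    by rewrite -{1}[w](scalerK nb) e1 scalerN scalerA mulNr scaleNr.
  move: e0; rewrite b0 scale0r addr0 => e0.
  by congr (_, _); apply: uinj; rewrite e0 (lin0 lu).
pose f (p : X) : Qm := u p.1.
have fhom : is_hom f.
  split => [a p p'|i p|h p]; rewrite /f /=; [exact: lu | exact: eu' | exact: au].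
have [g [ghom gm]] := injQ X Qm m f (conj mhom minj) fhom.
have gu : forall c, g (u c) = u c.
  move=> c; have := gm (c, 0); rewrite /m /f /= scale0r addr0; exact.
have gmono : is_mono g.
  apply: eu.2 => //; split; first exact: hom_comp.
  by move=> c c' /=; rewrite !gu; apply: uinj.
have gw : g w = 0.
  have := gm (0, 1); rewrite /m /f /= (lin0 lu) add0r scale1r => ->; first by [].
apply: False_ind; apply: nc; exists 0; rewrite scale0r.
exact: (mono_ker gmono).
Qed.

Lemma socle (i0 : I) (Qm : pm) (injQ : injective_module Qm)
  (u : smod i0 -> Qm) (eu : essential_mono u) (v : Qm) :
  killed v -> exists c : K, v = c *: u 1.
Proof.
move=> kv.
have hu : is_hom u by case: eu => [[]].
have [lu eu' au] := hu.
have hom j : pe j (pe j v) = pe j v by rewrite pe_orth eqxx.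
have [c ec] := socle_hom injQ eu (killed_pe i0 kv) (hom i0).
exists c; rewrite -[LHS](pe_sum v) (bigD1 i0) //= big1 ?addr0 // => j nj.
have [cj ecj] := socle_hom injQ eu (killed_pe j kv) (hom j).
rewrite -hom ecj (linZ (pe_lin j)) -eu' /= /s_e (negbTE nj) scale0r.
by rewrite (lin0 lu) scaler0.
Qed.

Lemma surj_mx (V X : lmodType K) n (b : 'I_n -> V) (f1 f2 : X -> V)
  (y : 'I_n -> X) (M : 'M[K]_n) :
  linear f1 -> linear f2 -> (forall x, f1 x = 0 -> x = 0) ->
  (forall w : 'I_n -> K, \sum_m w m *: b m = 0 -> forall m, w m = 0) ->
  (forall m, f2 (y m) = b m) -> (forall m, f1 (y m) = \sum_l M m l *: b l) ->
  forall t : 'rV[K]_n, exists w : 'rV[K]_n,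
    f1 (\sum_m w 0 m *: y m) = \sum_l t 0 l *: b l.
Proof.
move=> l1 l2 k1 indep fy2 fy1.
have comp (w : 'rV[K]_n) :
    f1 (\sum_m w 0 m *: y m) = \sum_l (w *m M) 0 l *: b l.
  rewrite (lin_sum l1).
  under eq_bigr do rewrite (linZ l1) fy1 scaler_sumr.
  rewrite exchange_big /=; apply: eq_big => // l _.
  by rewrite mxE scaler_suml; apply: eq_bigr => m _; rewrite scalerA.
have uM : M \in unitmx.
  rewrite unitmxE unitfE; apply/negP => /det0P [v nv vM].
  move/negP: nv; apply; apply/eqP/rowP => m.
  have e1 : f1 (\sum_m v 0 m *: y m) = 0.
    by rewrite comp vM; apply: big1 => l _; rewrite mxE scale0r.
  have e2 := k1 _ e1.
  have e3 : \sum_m (v 0 m : K) *: b m = 0.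
    have := congr1 f2 e2; rewrite (lin0 l2) (lin_sum l2) => e; rewrite -[RHS]e.
    by apply: eq_bigr => j _; rewrite (linZ l2) fy2.
  by rewrite mxE (indep _ e3).
move=> t; exists (t *m invmx M); by rewrite comp mulmxKV.
Qed.

Section Main.
Unset Implicit Arguments.
Variables (Q : I -> pm) (hQ : forall i, injective_hull_of_simple i (Q i))
  (a : I -> nat) (q : pm)
  (inj : forall k : {i : I & 'I_(a i)}, Q (tag k) -> q)
  (proj : forall k : {i : I & 'I_(a i)}, q -> Q (tag k))
  (hq : is_direct_sum inj proj).
Set Implicit Arguments.
Notation T := {i : I & 'I_(a i)}.

Definition U i : smod i -> Q i := projT1 (cid (hQ i).2).
Arguments U i : clear implicits.
Lemma U_ess i : essential_mono (U i).
Proof. exact: (projT2 (cid (hQ i).2)). Qed.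
Lemma U_hom i : is_hom (U i).
Proof. by case: (U_ess i) => [[]]. Qed.
Lemma U_inj i : injective (U i).
Proof. by case: (U_ess i) => [[]]. Qed.

Lemma inj_hom k : is_hom (inj k). Proof. by case: hq. Qed.
Lemma proj_hom k : is_hom (proj k). Proof. by case: hq. Qed.
Lemma proj_inj k v : proj k (inj k v) = v. Proof. by case: hq. Qed.
Lemma proj_inj_ne k l v : k != l -> proj l (inj k v) = 0. Proof. by case: hq => _ _ _ H _; apply: H. Qed.
Lemma decomp w : \sum_k inj k (proj k w) = w. Proof. by case: hq. Qed.

Lemma injq : injective_module q.
Proof.
move=> X Y u f mu hf.
have ex k : exists g : Y -> Q (tag k), is_hom g /\ forall x, g (u x) = proj k (f x).
  exact: (hQ (tag k)).1 X Y u (proj k \o f) mu (hom_comp hf (proj_hom k)).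
pose G k := projT1 (cid (ex k)).
have GP k : is_hom (G k) /\ forall x, G k (u x) = proj k (f x) := projT2 (cid (ex k)).
exists (fun y => \sum_k inj k (G k y)); split.
  by apply: hom_sum => k; exact: hom_comp (GP k).1 (inj_hom k).
by move=> x; rewrite -[RHS]decomp; apply: eq_bigr => k _; rewrite (GP k).2.
Qed.

Definition z (k : T) : q := inj k (U (tag k) 1).

Lemma z_span v : killed v -> exists lam : T -> K, v = \sum_k lam k *: z k.
Proof.
move=> kv.
have ex k : exists c : K, proj k v = c *: U (tag k) 1.
  apply: (socle (hQ (tag k)).1 (U_ess (tag k))).
  exact: killed_hom (proj_hom k) kv.
have [lam hl] := choice ex.
exists lam; rewrite -[LHS]decomp; apply: eq_bigr => k _.
by rewrite hl (linZ (hom_lin (inj_hom k))).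
Qed.


Lemma killed_simple i (c : smod i) : killed c.
Proof. by []. Qed.

Definition supp (s : seq T) (v : q) := forall l, l \notin s -> proj l v = 0.

Lemma ess_gen (s : seq T) : uniq s -> forall (Y : pm) (g : q -> Y), is_hom g ->
  (forall v, killed v -> supp s v -> g v = 0 -> v = 0) ->
  forall v, supp s v -> g v = 0 -> v = 0.
Proof.
elim: s => [_ Y g hg H v sv gv|k s IH /= /andP [ks us] Y g hg H].
  by rewrite -[v]decomp big1 // => l _; rewrite sv // (lin0 (hom_lin (inj_hom l))).
have lg := hom_lin hg.
have li l := hom_lin (inj_hom l).
have lp l := hom_lin (proj_hom l).
have hu := U_hom (tag k).
have mk : is_mono (g \o inj k).
  apply: (U_ess (tag k)).2; first exact: hom_comp (inj_hom k) hg.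
  split; first exact: hom_comp (hom_comp hu (inj_hom k)) hg.
  apply: ker_inj; first exact: hom_lin (hom_comp (hom_comp hu (inj_hom k)) hg).
  move=> c /= gc.
  have w0 : inj k (U (tag k) c) = 0.
    apply: H => //.
    - apply: killed_hom (inj_hom k) _; exact: killed_hom hu (killed_simple c).
    - by move=> l; rewrite inE negb_or => /andP [lk _]; rewrite proj_inj_ne // eq_sym.
  have := congr1 (proj k) w0; rewrite proj_inj (lin0 (lp k)) => uc.
  by move: uc; rewrite -(lin0 (hom_lin hu)); exact: U_inj.
have [r [hr rg]] := (hQ (tag k)).1 _ _ _ id mk (hom_id _).
have lr := hom_lin hr.
pose psi v := g (v - inj k (r (g v))).
have hpsi : is_hom psi.
  exact: (hom_comp (hom_sub (hom_id q) (hom_comp (hom_comp hg hr) (inj_hom k))) hg).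
have Hpsi : forall v, supp s v -> psi v = 0 -> v = 0.
  apply: IH => // v kv sv pv.
  set v' := v - inj k (r (g v)).
  have kv' : killed v'.
    rewrite /v'; apply: killedB => //; apply: killed_hom (inj_hom k) _.
    apply: killed_hom hr _; exact: killed_hom hg kv.
  have sv' : supp (k :: s) v'.
    move=> l; rewrite inE negb_or => /andP [lk ls].
    by rewrite (linB (lp l)) sv // proj_inj_ne ?subrr // eq_sym.
  have v'0 := H v' kv' sv' pv.
  have rk : r (g v) = 0.
    have := congr1 (proj k) v'0.
    rewrite (linB (lp k)) proj_inj (sv k ks) (lin0 (lp k)) sub0r => /eqP.
    by rewrite oppr_eq0 => /eqP.
  by move: v'0; rewrite /v' rk (lin0 (li k)) subr0.
move=> v sv gv.
set w := v - inj k (proj k v).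
have sw : supp s w.
  move=> l ls; rewrite /w (linB (lp l)); case: (eqVneq l k) => [->|lk].
    by rewrite proj_inj subrr.
  rewrite proj_inj_ne 1?eq_sym // subr0; apply: sv; by rewrite inE negb_or lk ls.
have grw : r (g w) = - proj k v.
  rewrite /w (linB lg) gv sub0r (linN lr); congr (- _); exact: rg.
have pw : psi w = 0.
  by rewrite /psi grw (linN (li k)) opprK /w subrK.
have w0 := Hpsi w sw pw.
have pk : proj k v = 0.
  have := rg (proj k v); rewrite /=.
  have -> : g (inj k (proj k v)) = 0.
    by move: w0; rewrite /w => /eqP; rewrite subr_eq0 => /eqP <-.
  by rewrite (lin0 lr) => <-.
by move: w0; rewrite /w pk (lin0 (li k)) subr0.
Qed.

Lemma ess_q (Y : pm) (g : q -> Y) : is_hom g ->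
  (forall v, killed v -> g v = 0 -> v = 0) -> injective g.
Proof.
move=> hg H; apply: ker_inj; first exact: hom_lin hg.
move=> v; have us : uniq (enum (predT : pred T)) by exact: enum_uniq.
apply: (ess_gen us) => //.
- by move=> w kw _; exact: H.
- by move=> l; rewrite mem_enum.
Qed.

Lemma z_killed k : killed (z k).
Proof. exact: killed_hom (inj_hom k) (killed_hom (U_hom _) (killed_simple _)). Qed.

Lemma z_pe j k : pe j (z k) = if j == tag k then z k else 0.
Proof.
have [_ ei _] := inj_hom k; have [lu eu _] := U_hom (tag k).
rewrite /z -ei -eu /= /s_e; case: (j == tag k); first by rewrite scale1r.
by rewrite scale0r (lin0 lu) (lin0 (hom_lin (inj_hom k))).
Qed.

Lemma z_indep n (e : 'I_n -> T) (einj : injective e) (w : 'I_n -> K) :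
  \sum_m w m *: z (e m) = 0 -> forall m, w m = 0.
Proof.
move=> H m0; have lp := hom_lin (proj_hom (e m0)).
have := congr1 (proj (e m0)) H.
rewrite (lin_sum lp) (lin0 lp) (bigD1 m0) //= big1 ?addr0 => [|m nm].
- rewrite (linZ lp) /z proj_inj -(hom_simple_scale (U_hom _)) => e0.
  by move: e0; rewrite -(lin0 (hom_lin (U_hom (tag (e m0))))); exact: U_inj.
- by rewrite (linZ lp) /z proj_inj_ne ?scaler0 // (inj_eq einj).
Qed.

Definition img (X : pm) (f : X -> q) (v : q) := exists y, f y = v.

Lemma swap (X : pm) (f1 f2 : X -> q) : is_mono f1 -> is_mono f2 ->
  forall k, ~ img f1 (z k) -> exists k', tag k' = tag k /\ ~ img f2 (z k').
Proof.
move=> m1 m2 k nk; apply: contrapT => H.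
have H' : forall k', tag k' = tag k -> img f2 (z k').
  by move=> k' ek; apply: contrapT => nk'; apply: H; exists k'.
have [[l1 e1 a1] i1] := m1; have [[l2 e2 a2] i2] := m2.
set i := tag k.
pose P := [pred l : T | tag l == i].
pose n := #|P|.
pose e := fun m : 'I_n => enum_val m.
have eP m : tag (e m) = i by have := enum_valP m; rewrite inE => /eqP.
have ex m : exists y, f2 y = z (e m) := H' _ (eP m).
have [y hy] := choice ex.
have ky m : killed (y m).
  move=> h; apply: (mono_ker m2); by rewrite a2 hy z_killed.
have hoy m : pe i (y m) = y m.
  by apply: i2; rewrite e2 hy z_pe -(eP m) eqxx.
have ex2 m : exists lam : T -> K, f1 (y m) = \sum_l lam l *: z l.
  exact: z_span (killed_hom m1.1 (ky m)).
have [Lam hL] := choice ex2.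
pose M := \matrix_(m, m') Lam m (e m').
have fy1 m : f1 (y m) = \sum_l M m l *: z (e l).
  rewrite -(hoy m) e1 (hL m) (lin_sum (pe_lin i)).
  under eq_bigr do rewrite (linZ (pe_lin i)) z_pe.
  rewrite (bigID P) /= [X in _ + X]big1 ?addr0 => [|l]; last first.
    by rewrite eq_sym => /negbTE ->; rewrite scaler0.
  rewrite (eq_bigr (fun l => Lam m l *: z l)) => [|l /eqP ->]; last by rewrite eqxx.
  transitivity (\sum_(l in P) Lam m l *: z l); first by apply: eq_bigl => l; rewrite inE.
  rewrite (big_enum_val (A:=P)) /=; apply: eq_bigr => m' _.
  by rewrite mxE.
have kk : k \in P by rewrite inE.
pose m0 := enum_rank_in kk k.
have em0 : e m0 = k by rewrite /e /m0 enum_rankK_in.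
have [w hw] := surj_mx l1 l2 (mono_ker m1) (z_indep (@enum_val_inj _ P)) hy fy1
  (delta_mx 0 m0).
apply: nk; exists (\sum_m w 0 m *: y m); rewrite hw (bigD1 m0) //= big1 ?addr0.
  by rewrite mxE !eqxx scale1r; exact: (congr1 z em0).
by move=> m nm; rewrite mxE (negbTE nm) andbF scale0r.
Qed.

Lemma base (X : pm) (f1 f2 : X -> q) : is_mono f1 -> is_mono f2 ->
  (forall k, img f1 (z k)) -> exists G, is_auto G /\ forall v, f2 v = G (f1 v).
Proof.
move=> m1 m2 H1.
have H2 : forall k, img f2 (z k).
  move=> k; apply: contrapT => nk.
  have [k' [_ nk']] := swap m2 m1 nk; exact: nk' (H1 k').
have sp (f : X -> q) : is_mono f -> (forall k, img f (z k)) ->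
    forall v, killed v -> img f v.
  move=> mf Hf v kv; have [lam ->] := z_span kv.
  have [yk hyk] := choice Hf.
  have lf := hom_lin mf.1.
  exists (\sum_k lam k *: yk k); rewrite (lin_sum lf); apply: eq_bigr => k _.
  by rewrite (linZ lf) hyk.
have [G [hG GP]] := injq m1 m2.1.
have lG := hom_lin hG.
have [[l1 e1 a1] i1] := m1; have [[l2 e2 a2] i2] := m2.
have Gk : forall v, killed v -> G v = 0 -> v = 0.
  move=> v kv Gv; have [y ey] := sp _ m1 H1 v kv.
  move: Gv; rewrite -ey GP => /(mono_ker m2) ->; exact: (lin0 l1).
have Ginj := ess_q hG Gk.
have Gs : forall v, killed v -> exists v', killed v' /\ G v' = v.
  move=> v kv; have [y ey] := sp _ m2 H2 v kv.
  exists (f1 y); split; last by rewrite GP.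
  apply: killed_hom m1.1 _ => h; apply: (mono_ker m2); by rewrite a2 ey kv.
have [r [hr rG]] := injq (conj hG Ginj) (hom_id q).
have rk : forall v, killed v -> r v = 0 -> v = 0.
  move=> v kv rv; have [v' [kv' Gv']] := Gs v kv.
  move: rv; rewrite -Gv' rG /= => ->; exact: lin0.
have rinj := ess_q hr rk.
exists G; split => //; split => //.
by exists r => [v|v]; [exact: rG | apply: rinj; rewrite rG].
Qed.

Lemma ext_mono (X : pm) (f : X -> q) (i : I) (z0 : q) : is_mono f -> killed z0 ->
  (forall j, pe j z0 = if j == i then z0 else 0) -> ~ img f z0 ->
  is_mono (fun p : prod_mod X (smod i) => f p.1 + (p.2 : K) *: z0).
Proof.
move=> [[lf ef af] fi] kz ez nz.
have mhom : is_hom (fun p : prod_mod X (smod i) => f p.1 + (p.2 : K) *: z0).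
  split => [c p p'|j p|h p] /=.
  - rewrite lf.
    have -> : (c *: p.2 + p'.2) *: z0 = c *: ((p.2 : K) *: z0) + (p'.2 : K) *: z0.
      by rewrite scalerDl scalerA.
    by rewrite scalerDr addrACA.
  - rewrite ef (linD (pe_lin j)) (linZ (pe_lin j)); congr (_ + _).
    rewrite ez /s_e; case: (j == i); first by rewrite scale1r.
    by rewrite !scale0r scaler0.
  - rewrite (linD (pa_lin h)) (linZ (pa_lin h)) kz scaler0 addr0 -af.
    by rewrite /s_a /= scale0r addr0.
split => //; apply: ker_inj; first by case: mhom.
case=> [y c] /= e0.
have c0 : c = 0.
  apply/eqP; apply: contraT => nc; exfalso; apply: nz.
  exists (- (c : K)^-1 *: y).
  have e1 : (c : K) *: z0 = - f y by apply/eqP; rewrite -addr_eq0 addrC e0.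
  by rewrite (linZ lf) -[RHS](scalerK nc) e1 scalerN scaleNr.
move: e0; rewrite c0 scale0r addr0 => e0.
by congr (_, _); apply: fi; rewrite e0 (lin0 lf).
Qed.

Definition cnt (X : pm) (f : X -> q) := #|[pred k : T | ~~ `[< img f (z k) >]]|.

Lemma main_ind (n : nat) : forall (X : pm) (f1 f2 : X -> q), is_mono f1 -> is_mono f2 ->
  (cnt f1 <= n)%N -> exists G, is_auto G /\ forall v, f2 v = G (f1 v).
Proof.
elim: n => [|n IH] X f1 f2 m1 m2 c.
  apply: base => // k; apply: contrapT => nk.
  move: c; rewrite leqn0 => /eqP /card0_eq /(_ k); rewrite !inE.
  by move/asboolPn: nk => ->.
case: (pselect (forall k, img f1 (z k))) => [all|]; first exact: base.
move=> /existsNP [k nk].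
have [k' [ek nk']] := swap m1 m2 nk.
have mg1 := ext_mono m1 (z_killed k) (fun j => z_pe j k) nk.
have ez' : forall j, pe j (z k') = if j == tag k then z k' else 0.
  by move=> j; rewrite z_pe ek.
have mg2 := ext_mono m2 (z_killed k') ez' nk'.
pose g1 := fun p : prod_mod X (smod (tag k)) => f1 p.1 + (p.2 : K) *: z k.
have cg : (cnt g1 <= n)%N;
  last first.
  have [G [aG GP]] := IH _ _ _ mg1 mg2 cg.
  by exists G; split => // v; have := GP (v, 0); rewrite /= !scale0r !addr0.
rewrite -ltnS; apply: leq_trans c.
rewrite /cnt [X in (_ < X)%N](cardD1 k) inE; move/asboolPn: (nk) => ->; rewrite add1n ltnS.
apply: subset_leq_card; apply/subsetP => l; rewrite !inE => /asboolPn nl.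
apply/andP; split.
  apply/eqP => lk; apply: nl; exists (0, 1); rewrite lk /g1 /= (lin0 (hom_lin m1.1)).
  by rewrite add0r scale1r.
apply/asboolPn => -[y ey]; apply: nl; exists (y, 0); by rewrite /g1 /= scale0r addr0.
Qed.

End Main.
End S.

Unset Implicit Arguments.
Set Strict Implicit.

Theorem mainTheorem1 (R : realType) (I E : finType) (src tgt : E -> I)
    (noloop : forall e, src e != tgt e)
    (Q : I -> pmod R[i] src tgt)
    (hQ : forall i, injective_hull_of_simple i (Q i))
    (a : I -> nat) (q : pmod R[i] src tgt)
    (inj : forall k : {i : I & 'I_(a i)}, Q (tag k) -> q)
    (proj : forall k : {i : I & 'I_(a i)}, q -> Q (tag k))
    (hq : is_direct_sum inj proj)
    (x : pmod R[i] src tgt) (hx : fin_dim x)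
    (hsub : exists f : x -> q, is_mono f)
    (f1 f2 : x -> q) (hf1 : is_mono f1) (hf2 : is_mono f2) :
  exists g : q -> q, is_auto g /\ forall v, f2 v = g (f1 v).
Proof.
exact: (@main_ind _ _ _ src tgt Q hQ a q inj proj hq (cnt hQ inj f1) x f1 f2 hf1 hf2 (leqnn _)).
Qed.
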